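(* Let $\gamma>0$ and $S=(S_1,\ldots,S_n)$ be nonnegative nonzero symmetric $p\times p$ matrices. Then for all $\Delta,\Delta'\in\mathcal D_n^+$, $$d_s\big(\Lambda^S(\Delta),\Lambda^S(\Delta')\big)\le\max\big(\phi^S_\gamma(\Delta),\phi^S_\gamma(\Delta')\big)\,d_s(\Delta,\Delta'),$$ and in particular $\Lambda^S:\mathcal D_n^+\to\mathcal D_n^+$ is stable.
   Context: $\mathcal D_n^+$: $n\times n$ diagonal matrices with positive diagonal entries; $d_s(\Delta,\Delta')=\max_i\frac{|\Delta_i-\Delta'_i|}{\sqrt{\Delta_i\Delta'_i}}$; a map is stable if it is $1$-Lipschitz for $d_s$. $Q_\gamma(S,\Delta)=\big(\frac1n\sum_i\Delta_iS_i+\gamma I_p\big)^{-1}$, $\phi^S_\gamma(\Delta)=\|I_p-\gamma Q_\gamma(S,\Delta)\|$ (spectral norm). $\Lambda^S(\Delta)\in\mathcal D_n^+$ is the unique solution of $\Lambda^S(\Delta)_i=\frac1n\operatorname{tr}\Big(S_i\big(\frac1n\sum_{j=1}^n\frac{\Delta_jS_j}{1+\Delta_j\Lambda^S(\Delta)_j}+\gamma I_p\big)^{-1}\Big)$, $i\in[n]$. *)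

(* Defs.v *)
From HB Require Import structures.
From mathcomp Require Import all_boot all_order all_algebra.
From mathcomp Require Import all_classical all_reals.
Set Implicit Arguments. Unset Strict Implicit. Unset Printing Implicit Defensive.
Import Order.TTheory GRing.Theory Num.Theory.
Local Open Scope ring_scope.
Local Open Scope classical_set_scope.

Section Defs.
Variable R : realType.

Definition vnorm (p : nat) (x : 'cV[R]_p) : R :=
  Num.sqrt (\sum_(i < p) x i ord0 ^+ 2).

Definition specnorm (p : nat) (A : 'M[R]_p) : R :=
  sup [set vnorm (A *m x) | x in [set x : 'cV[R]_p | vnorm x <= 1]].

(* symmetric positive semidefinite ("nonnegative symmetric") matrix *)
Definition psd_sym (p : nat) (S : 'M[R]_p) : Prop :=
  S^T = S /\ forall x : 'cV[R]_p, 0 <= (x^T *m S *m x) ord0 ord0.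

(* an element of D_n^+ is represented by its diagonal (positive entries) *)
Definition posdiag (n : nat) (D : 'I_n -> R) : Prop := forall i, 0 < D i.

Definition d_s (n : nat) (D D' : 'I_n -> R) : R :=
  \big[Num.max/0]_(i < n) (`|D i - D' i| / Num.sqrt (D i * D' i)).

Definition Qg (n p : nat) (gamma : R) (S : 'I_n -> 'M[R]_p) (D : 'I_n -> R)
  : 'M[R]_p :=
  invmx ((n%:R)^-1 *: (\sum_(i < n) D i *: S i) + gamma%:M).

Definition phiS (n p : nat) (gamma : R) (S : 'I_n -> 'M[R]_p) (D : 'I_n -> R)
  : R := specnorm (1%:M - gamma *: Qg gamma S D).

(* L solves the defining fixed-point equation of Lambda^S(D) *)
Definition is_LambdaS (n p : nat) (gamma : R) (S : 'I_n -> 'M[R]_p)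
  (D L : 'I_n -> R) : Prop :=
  posdiag L /\
  forall i, L i = (n%:R)^-1 * \tr (S i *m invmx
      ((n%:R)^-1 *: (\sum_(j < n) (D j / (1 + D j * L j)) *: S j) + gamma%:M)).

End Defs.

(* Main.v *)
Require Import Defs.
From HB Require Import structures.
From mathcomp Require Import all_boot all_order all_algebra.
From mathcomp Require Import all_classical all_reals.
From mathcomp Require Import ring lra.
Import Order.TTheory GRing.Theory Num.Theory.
Local Open Scope ring_scope.
Set Implicit Arguments. Unset Strict Implicit. Unset Printing Implicit Defensive.

Definition bil (R : realType) (p : nat) (S : 'M[R]_p) (x y : 'cV[R]_p) : R :=
  (x^T *m S *m y) ord0 ord0.
Definition dotv (R : realType) (p : nat) (x y : 'cV[R]_p) : R :=
  (x^T *m y) ord0 ord0.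


Lemma bil_sym (R : realType) (p : nat) (S : 'M[R]_p) x y :
  S^T = S -> bil S x y = bil S y x.
Proof.
move=> hS; rewrite /bil.
have -> : (x^T *m S *m y) ord0 ord0 = ((x^T *m S *m y)^T) ord0 ord0 by rewrite [RHS]mxE.
by rewrite !trmx_mul trmxK hS mulmxA.
Qed.

Lemma dotv_sym (R : realType) (p : nat) (x y : 'cV[R]_p) : dotv x y = dotv y x.
Proof.
rewrite /dotv.
have -> : (x^T *m y) ord0 ord0 = ((x^T *m y)^T) ord0 ord0 by rewrite [RHS]mxE.
by rewrite !trmx_mul trmxK.
Qed.

Lemma bilDl (R : realType) (p : nat) (S : 'M[R]_p) x1 x2 y :
  bil S (x1 + x2) y = bil S x1 y + bil S x2 y.
Proof. by rewrite /bil linearD /= !mulmxDl mxE. Qed.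

Lemma bilDr (R : realType) (p : nat) (S : 'M[R]_p) x y1 y2 :
  bil S x (y1 + y2) = bil S x y1 + bil S x y2.
Proof. by rewrite /bil !mulmxDr mxE. Qed.

Lemma bilZl (R : realType) (p : nat) (S : 'M[R]_p) (a : R) x y :
  bil S (a *: x) y = a * bil S x y.
Proof. by rewrite /bil linearZ /= -!scalemxAl mxE. Qed.

Lemma bilZr (R : realType) (p : nat) (S : 'M[R]_p) (a : R) x y :
  bil S x (a *: y) = a * bil S x y.
Proof. by rewrite /bil -!scalemxAr mxE. Qed.

Lemma bilDm (R : realType) (p : nat) (S1 S2 : 'M[R]_p) x y :
  bil (S1 + S2) x y = bil S1 x y + bil S2 x y.
Proof. by rewrite /bil mulmxDr mulmxDl mxE. Qed.

Lemma bilZm (R : realType) (p : nat) (S : 'M[R]_p) (a : R) x y :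
  bil (a *: S) x y = a * bil S x y.
Proof. by rewrite /bil -scalemxAr -scalemxAl mxE. Qed.

Lemma bil_sum (R : realType) (p n : nat) (F : 'I_n -> 'M[R]_p) x y :
  bil (\sum_j F j) x y = \sum_j bil (F j) x y.
Proof. by rewrite /bil mulmx_sumr mulmx_suml summxE. Qed.

Lemma bil_scalar (R : realType) (p : nat) (a : R) x y :
  bil (a%:M : 'M[R]_p) x y = a * dotv x y.
Proof. by rewrite /bil mul_mx_scalar -scalemxAl mxE. Qed.

Lemma bilMr (R : realType) (p : nat) (S A : 'M[R]_p) x y :
  bil S x (A *m y) = bil (S *m A) x y.
Proof. by rewrite /bil !mulmxA. Qed.

Lemma bilMl (R : realType) (p : nat) (S A : 'M[R]_p) x y :
  bil S (A *m x) y = bil (A^T *m S) x y.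
Proof. by rewrite /bil trmx_mul !mulmxA. Qed.

Lemma dotv_bil (R : realType) (p : nat) (x y : 'cV[R]_p) : dotv x y = bil 1%:M x y.
Proof. by rewrite /bil /dotv mulmx1. Qed.

Lemma dotvE (R : realType) (p : nat) (x y : 'cV[R]_p) :
  dotv x y = \sum_i x i ord0 * y i ord0.
Proof. by rewrite /dotv mxE; apply: eq_bigr => i _; rewrite mxE. Qed.

Lemma dotv_ge0 (R : realType) (p : nat) (x : 'cV[R]_p) : 0 <= dotv x x.
Proof. by rewrite dotvE sumr_ge0 // => i _; rewrite -expr2 sqr_ge0. Qed.

Lemma bilNm (R : realType) (p : nat) (S : 'M[R]_p) x y :
  bil (- S) x y = - bil S x y.
Proof. by rewrite /bil mulmxN mulNmx mxE. Qed.

Lemma bilBm (R : realType) (p : nat) (S1 S2 : 'M[R]_p) x y :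
  bil (S1 - S2) x y = bil S1 x y - bil S2 x y.
Proof. by rewrite bilDm bilNm. Qed.


Definition ev (R : realType) (p : nat) (k : 'I_p) : 'cV[R]_p := delta_mx k ord0.

Lemma bil_ev (R : realType) (p : nat) (P : 'M[R]_p) k j :
  bil P (ev R k) (ev R j) = P k j.
Proof.
by rewrite /bil /ev trmx_delta -rowE -colE !mxE.
Qed.

Lemma bil_ev_l (R : realType) (p : nat) (P : 'M[R]_p) k x :
  bil P (ev R k) x = (P *m x) k ord0.
Proof. by rewrite /bil /ev trmx_delta -rowE -row_mul mxE. Qed.

Lemma bil_quad (R : realType) (p : nat) (P : 'M[R]_p) x y (s : R) :
  P^T = P ->
  bil P (x + s *: y) (x + s *: y) = bil P x x + 2 * s * bil P x y + s ^+ 2 * bil P y y.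
Proof.
move=> hP; rewrite !bilDl !bilDr !bilZl !bilZr (bil_sym y x hP); ring.
Qed.

Lemma psd_zero (R : realType) (p : nat) (P : 'M[R]_p) k j :
  P^T = P -> (forall x, 0 <= bil P x x) -> P k k = 0 -> P k j = 0.
Proof.
move=> hT hP hk.
set c := P k j; set d := P j j.
have hd : 0 <= d by rewrite /d -bil_ev hP.
have := hP (ev R k + (- c / (d + 1)) *: ev R j).
rewrite bil_quad // !bil_ev hk -/c -/d => h.
have hd1 : 0 < d + 1 by lra.
have : 0 <= - c ^+ 2 * (d + 2).
  have e : - c ^+ 2 * (d + 2) =
     (0 + 2 * (- c / (d + 1)) * c + (- c / (d + 1)) ^+ 2 * d) * (d + 1) ^+ 2.
    by field; rewrite gt_eqF.
  by rewrite e mulr_ge0 // sqr_ge0.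
move=> h2; apply/eqP; rewrite -sqrf_eq0 eq_le sqr_ge0 andbT.
by nra.
Qed.

Lemma tr11 (R : realType) (A : 'M[R]_1) : \tr A = A ord0 ord0.
Proof. by rewrite /mxtrace big_ord1. Qed.

Lemma tr_psd_ind (R : realType) (p : nat) (m : nat) (P Rm : 'M[R]_p) :
  (#|[set k | P k k != 0%R]| <= m)%N ->
  P^T = P -> (forall x, 0 <= bil P x x) -> (forall x, 0 <= bil Rm x x) ->
  0 <= \tr (P *m Rm).
Proof.
elim: m P => [|m IH] P hcard hT hP hR.
  have P0 : P = 0.
    apply/matrixP => i j; rewrite mxE; apply: (psd_zero _ hT hP).
    apply/eqP; move: hcard; rewrite leqn0 cards_eq0 => /eqP /setP /(_ i).
    by rewrite !inE => /negbFE.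
  by rewrite P0 mul0mx linear0.
case: (boolP [exists k, P k k != 0]); last first.
  move/existsPn => hall.
  have P0 : P = 0.
    apply/matrixP => i j; rewrite mxE; apply: (psd_zero _ hT hP).
    by apply/eqP; move: (hall i); rewrite negbK.
  by rewrite P0 mul0mx linear0.
move/existsP => [k hk].
have hkpos : 0 < P k k by rewrite lt_def hk -bil_ev hP.
set s : 'cV[R]_p := col k P.
set P' := P - (P k k)^-1 *: (s *m s^T).
have hsx x : (s^T *m x) ord0 ord0 = bil P (ev R k) x.
  by rewrite bil_ev_l /s tr_col hT -row_mul mxE.
have hP'T : P'^T = P'.
  by rewrite /P' linearB /= linearZ /= trmx_mul trmxK hT.
have hss x : bil (s *m s^T) x x = bil P (ev R k) x ^+ 2.
  rewrite -hsx /bil mulmxA -mulmxA mxE big_ord1 expr2; congr (_ * _).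
  exact: dotv_sym.
have hP'q x : bil P' x x = bil P x x - (P k k)^-1 * bil P (ev R k) x ^+ 2.
  by rewrite /P' bilBm bilZm hss.
have hP' x : 0 <= bil P' x x.
  rewrite hP'q.
  set b := bil P (ev R k) x.
  have := hP (x + (- (b / P k k)) *: ev R k).
  rewrite bil_quad // bil_ev (bil_sym x (ev R k) hT) -/b.
  have -> : bil P x x + 2 * - (b / P k k) * b + (- (b / P k k)) ^+ 2 * P k k
     = bil P x x - (P k k)^-1 * b ^+ 2 by field; rewrite gt_eqF.
  by [].
have hdiag j : P' j j = P j j - (P k k)^-1 * P j k ^+ 2.
  rewrite /P' !mxE big_ord1 !mxE expr2 /=.
  done.
have hsub : [set j | P' j j != 0] \proper [set j | P j j != 0].
  apply/properP; split.
    apply/fintype.subsetP => j; rewrite !inE hdiag; apply: contraNN => /eqP hj.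
    by rewrite hj (psd_zero k hT hP hj) expr0n /= mulr0 subr0.
  exists k; first by rewrite inE.
  by rewrite inE hdiag negbK expr2 mulrA mulVf // mul1r subrr.
have hc' : (#|[set j | P' j j != 0%R]| <= m)%N.
  by rewrite -ltnS (leq_trans (proper_card hsub) hcard).
have e : \tr (P *m Rm) = \tr (P' *m Rm) + (P k k)^-1 * bil Rm s s.
  rewrite /P' mulmxBl linearB /= -scalemxAl linearZ /= -mulmxA (mxtrace_mulC s) tr11.
  by rewrite /bil subrK.
rewrite e; apply: addr_ge0; first exact: IH.
by apply: mulr_ge0; [rewrite invr_ge0 ltW | apply: hR].
Qed.

Lemma tr_psd (R : realType) (p : nat) (P Rm : 'M[R]_p) :
  P^T = P -> (forall x, 0 <= bil P x x) -> (forall x, 0 <= bil Rm x x) ->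
  0 <= \tr (P *m Rm).
Proof. by apply: (@tr_psd_ind R p #|[set k | P k k != 0%R]|). Qed.


Definition Mw (R : realType) (n p : nat) (S : 'I_n -> 'M[R]_p) (w : 'I_n -> R)
  : 'M[R]_p := (n%:R)^-1 *: (\sum_(j < n) w j *: S j).
Definition Aw (R : realType) (n p : nat) (gamma : R) (S : 'I_n -> 'M[R]_p)
  (w : 'I_n -> R) : 'M[R]_p := Mw S w + gamma%:M.

Lemma dotv_eq0 (R : realType) (p : nat) (x : 'cV[R]_p) : dotv x x = 0 -> x = 0.
Proof.
rewrite dotvE => h; apply/matrixP => i j; rewrite (ord1 j) mxE.
have hi := psumr_eq0P (P := predT) (F := fun i => x i ord0 * x i ord0) _ h.
have := hi (fun k _ => ltac:(by rewrite -expr2 sqr_ge0)) i isT.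
by move/eqP; rewrite mulf_eq0 orbb => /eqP.
Qed.

Lemma Mw_sym (R : realType) (n p : nat) (S : 'I_n -> 'M[R]_p) w :
  (forall j, (S j)^T = S j) -> (Mw S w)^T = Mw S w.
Proof.
move=> hS; rewrite /Mw linearZ /= linear_sum /=; congr (_ *: _).
by apply: eq_bigr => j _; rewrite linearZ /= hS.
Qed.

Lemma Mw_bil (R : realType) (n p : nat) (S : 'I_n -> 'M[R]_p) w x y :
  bil (Mw S w) x y = (n%:R)^-1 * \sum_j w j * bil (S j) x y.
Proof.
rewrite /Mw bilZm bil_sum; congr (_ * _); apply: eq_bigr => j _.
by rewrite bilZm.
Qed.

Lemma Mw_psd (R : realType) (n p : nat) (S : 'I_n -> 'M[R]_p) w x :
  (forall j, 0 <= bil (S j) x x) -> (forall j, 0 <= w j) ->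
  0 <= bil (Mw S w) x x.
Proof.
move=> hS hw; rewrite Mw_bil mulr_ge0 ?invr_ge0 ?ler0n //.
by apply: sumr_ge0 => j _; apply: mulr_ge0.
Qed.

Lemma Mw_mono (R : realType) (n p : nat) (S : 'I_n -> 'M[R]_p) w w' x :
  (forall j, 0 <= bil (S j) x x) -> (forall j, w j <= w' j) ->
  bil (Mw S w) x x <= bil (Mw S w') x x.
Proof.
move=> hS hw; rewrite !Mw_bil ler_wpM2l ?invr_ge0 ?ler0n //.
by apply: ler_sum => j _; apply: ler_wpM2r.
Qed.

Lemma Aw_bil (R : realType) (n p : nat) gamma (S : 'I_n -> 'M[R]_p) w x y :
  bil (Aw gamma S w) x y = bil (Mw S w) x y + gamma * dotv x y.
Proof. by rewrite /Aw bilDm bil_scalar. Qed.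

Lemma Aw_sym (R : realType) (n p : nat) gamma (S : 'I_n -> 'M[R]_p) w :
  (forall j, (S j)^T = S j) -> (Aw gamma S w)^T = Aw gamma S w.
Proof. by move=> hS; rewrite /Aw linearD /= Mw_sym // tr_scalar_mx. Qed.

Lemma Aw_unit (R : realType) (n p : nat) gamma (S : 'I_n -> 'M[R]_p) w :
  0 < gamma -> (forall j, (S j)^T = S j) -> (forall j x, 0 <= bil (S j) x x) ->
  (forall j, 0 <= w j) -> Aw gamma S w \in unitmx.
Proof.
move=> hg hT hS hw; rewrite -row_free_unit; apply: inj_row_free => v hv.
have hx : Aw gamma S w *m v^T = 0.
  by rewrite -{1}(Aw_sym gamma w hT) -trmx_mul hv trmx0.
have h0 : bil (Aw gamma S w) v^T v^T = 0 by rewrite /bil -mulmxA hx mulmx0 mxE.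
have h1 := Mw_psd (fun j => hS j v^T) hw.
have h2 := dotv_ge0 v^T.
rewrite Aw_bil in h0.
have : dotv v^T v^T = 0.
  apply/eqP; rewrite eq_le h2 andbT.
  by rewrite -(pmulr_rle0 _ hg); lra.
by move/dotv_eq0 => /(congr1 trmx); rewrite trmxK trmx0.
Qed.


Lemma trlin (R : realType) (n p : nat) (P X Y : 'M[R]_p) (c : 'I_n -> R)
  (Q : 'I_n -> 'M[R]_p) :
  \tr (P *m (X *m (\sum_j c j *: Q j) *m Y)) =
  \sum_j c j * \tr (P *m X *m Q j *m Y).
Proof.
rewrite mulmx_sumr mulmx_suml mulmx_sumr linear_sum; apply: eq_bigr => j _.
by rewrite -scalemxAr -scalemxAl -scalemxAr linearZ /= !mulmxA.
Qed.

Lemma tr_diff (R : realType) (n p : nat) gamma (S : 'I_n -> 'M[R]_p) b b' (P : 'M[R]_p) :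
  Aw gamma S b \in unitmx -> Aw gamma S b' \in unitmx ->
  \tr (P *m invmx (Aw gamma S b)) - \tr (P *m invmx (Aw gamma S b')) =
  (n%:R)^-1 * \sum_j (b' j - b j) *
     \tr (P *m invmx (Aw gamma S b) *m S j *m invmx (Aw gamma S b')).
Proof.
move=> hA hA'.
set X := invmx (Aw gamma S b); set Y := invmx (Aw gamma S b').
have e : X - Y = X *m (Aw gamma S b' - Aw gamma S b) *m Y.
  rewrite mulmxBr mulmxBl -mulmxA mulmxV // mulmx1 mulVmx // mul1mx.
  by [].
have e2 : Aw gamma S b' - Aw gamma S b = (n%:R)^-1 *: \sum_j (b' j - b j) *: S j.
  rewrite /Aw /Mw opprD addrACA subrr addr0 -scalerBr -sumrB.
  by congr (_ *: _); apply: eq_bigr => j _; rewrite scalerBl.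
rewrite -linearB /= -mulmxBr e e2 -scalemxAr -scalemxAl -scalemxAr linearZ /=.
by rewrite trlin.
Qed.

Lemma G_ge0 (R : realType) (p : nat) (Si Sj W : 'M[R]_p) :
  Si^T = Si -> (forall x, 0 <= bil Si x x) -> (forall x, 0 <= bil Sj x x) ->
  W^T = W -> 0 <= \tr (Si *m W *m Sj *m W).
Proof.
move=> hT hi hj hW.
have -> : Si *m W *m Sj *m W = Si *m (W *m Sj *m W) by rewrite !mulmxA.
apply: tr_psd => // x.
by rewrite -bilMr -{1}hW -bilMl.
Qed.

Lemma tr_swap (R : realType) (p : nat) (Si Sj X Y : 'M[R]_p) :
  Si^T = Si -> Sj^T = Sj -> X^T = X -> Y^T = Y ->
  \tr (Si *m Y *m Sj *m X) = \tr (Si *m X *m Sj *m Y).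
Proof.
move=> h1 h2 h3 h4.
rewrite -mxtrace_tr !trmx_mul h1 h2 h3 h4 mxtrace_mulC !mulmxA.
by rewrite -mulmxA (mxtrace_mulC (Sj *m Y)) !mulmxA.
Qed.

Lemma G_expand (R : realType) (p : nat) (Si Sj X Y : 'M[R]_p) (s : R) :
  \tr (Si *m (X + s *: Y) *m Sj *m (X + s *: Y)) =
  \tr (Si *m X *m Sj *m X) + s * \tr (Si *m X *m Sj *m Y)
  + s * \tr (Si *m Y *m Sj *m X) + s ^+ 2 * \tr (Si *m Y *m Sj *m Y).
Proof.
rewrite !(mulmxDr, mulmxDl) !linearD /=.
rewrite -!(scalemxAr, scalemxAl).
rewrite !linearZ /=; ring.
Qed.

Lemma amgm (R : realType) (p : nat) (Si Sj X Y : 'M[R]_p) (tau : R) :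
  0 < tau -> Si^T = Si -> Sj^T = Sj -> X^T = X -> Y^T = Y ->
  (forall x, 0 <= bil Si x x) -> (forall x, 0 <= bil Sj x x) ->
  2 * `|\tr (Si *m X *m Sj *m Y)| <=
  tau * \tr (Si *m X *m Sj *m X) + \tr (Si *m Y *m Sj *m Y) / tau.
Proof.
move=> ht h1 h2 h3 h4 p1 p2.
have hG s : 0 <= \tr (Si *m X *m Sj *m X) + 2 * s * \tr (Si *m X *m Sj *m Y)
     + s ^+ 2 * \tr (Si *m Y *m Sj *m Y).
  have hW : (X + s *: Y)^T = X + s *: Y by rewrite linearD /= linearZ /= h3 h4.
  have := G_ge0 h1 p1 p2 hW.
  by rewrite G_expand tr_swap //; congr (0 <= _); ring.
set u := \tr (Si *m X *m Sj *m X); set c := \tr (Si *m X *m Sj *m Y).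
set v := \tr (Si *m Y *m Sj *m Y).
have hp := hG (tau^-1); have hm := hG (- tau^-1).
have e1 : tau * (u + 2 * tau^-1 * c + tau^-1 ^+ 2 * v) = tau * u + 2 * c + v / tau.
  by field; rewrite gt_eqF.
have e2 : tau * (u + 2 * (- tau^-1) * c + (- tau^-1) ^+ 2 * v) = tau * u - 2 * c + v / tau.
  by field; rewrite gt_eqF.
have q1 := mulr_ge0 (ltW ht) hp; have q2 := mulr_ge0 (ltW ht) hm.
rewrite e1 in q1; rewrite e2 in q2.
case: (ler0P c) => hc.
  lra.
lra.
Qed.

Lemma trXMX (R : realType) (n p : nat) (Si X : 'M[R]_p) (S : 'I_n -> 'M[R]_p) b :
  \tr (Si *m (X *m Mw S b *m X)) =
  (n%:R)^-1 * \sum_j b j * \tr (Si *m X *m S j *m X).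
Proof. by rewrite /Mw -scalemxAr -scalemxAl -scalemxAr linearZ /= trlin. Qed.

Lemma trXMX_le (R : realType) (n p : nat) gamma (S : 'I_n -> 'M[R]_p) b
   (phi : R) (Si : 'M[R]_p) :
  (forall j, (S j)^T = S j) -> Aw gamma S b \in unitmx ->
  (forall z, (1 - phi) * bil (Mw S b) z z <= phi * gamma * dotv z z) ->
  Si^T = Si -> (forall x, 0 <= bil Si x x) ->
  \tr (Si *m (invmx (Aw gamma S b) *m Mw S b *m invmx (Aw gamma S b)))
   <= phi * \tr (Si *m invmx (Aw gamma S b)).
Proof.
move=> hT hU hb hiT hi.
set A := Aw gamma S b; set X := invmx A; set M := Mw S b.
have hAT : A^T = A by apply: Aw_sym.
have hXT : X^T = X by rewrite /X trmx_inv hAT.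
have : 0 <= \tr (Si *m (phi *: X - X *m M *m X)).
  apply: tr_psd => // x.
  set z := X *m x.
  have hz : A *m z = x by rewrite /z mulmxA mulmxV // mul1mx.
  rewrite bilBm bilZm.
  have -> : bil X x x = bil A z z.
    by rewrite -{1 2}hz bilMl bilMr hAT mulmxV // mul1mx.
  have -> : bil (X *m M *m X) x x = bil M z z.
    by rewrite -bilMr -{1}hXT -bilMl.
  rewrite /A Aw_bil -/M; have := hb z; rewrite -/M => h.
  lra.
by rewrite mulmxBr linearB /= -scalemxAr linearZ /= subr_ge0.
Qed.

Lemma term_bound (R : realType) (bj bj' c u v t delta : R) :
  0 < bj -> 0 < bj' -> 0 < t -> 0 <= delta ->
  `|bj - bj'| <= delta * Num.sqrt (bj * bj') ->
  (forall tau, 0 < tau -> 2 * `|c| <= tau * u + v / tau) ->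
  `|bj' - bj| * `|c| <= delta / 2 * (t * bj * u + bj' * v / t).
Proof.
move=> hb hb' ht hd hdiff hamgm.
set sb := Num.sqrt bj; set sb' := Num.sqrt bj'.
have hsb : 0 < sb by rewrite sqrtr_gt0.
have hsb' : 0 < sb' by rewrite sqrtr_gt0.
have htau : 0 < t * sb / sb' by rewrite divr_gt0 // mulr_gt0.
have h := hamgm _ htau.
have e : sb * sb' * (t * sb / sb' * u + v / (t * sb / sb')) =
         t * sb ^+ 2 * u + sb' ^+ 2 * v / t.
  by field; rewrite !gt_eqF.
rewrite /sb /sb' !sqr_sqrtr ?ltW // in e.
rewrite -/sb -/sb' in e.
have hd2 : `|bj' - bj| <= delta * (sb * sb').
  by rewrite distrC /sb /sb' -sqrtrM ?(ltW hb).
have hc0 : 0 <= `|c| by [].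
have : `|bj' - bj| * `|c| <= delta * (sb * sb') * `|c|.
  by rewrite ler_wpM2r.
move=> h1; apply: (le_trans h1).
rewrite -e.
have hss : 0 <= delta * (sb * sb') by rewrite mulr_ge0 // mulr_ge0 // ltW.
have := ler_wpM2l hss h.
move=> h2.
have -> : delta / 2 * (sb * sb' * (t * sb / sb' * u + v / (t * sb / sb'))) =
   delta * (sb * sb') * (t * sb / sb' * u + v / (t * sb / sb')) / 2.
  by ring.
rewrite ler_pdivlMr //.
have -> : delta * (sb * sb') * `|c| * 2 = delta * (sb * sb') * (2 * `|c|) by ring.
exact: h2.
Qed.

Lemma keyK (R : realType) (n p : nat) gamma (S : 'I_n -> 'M[R]_p) b b'
   (phi delta : R) (i : 'I_n) :
  0 < gamma -> (forall j, (S j)^T = S j) -> (forall j x, 0 <= bil (S j) x x) ->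
  (forall j, 0 < b j) -> (forall j, 0 < b' j) -> 0 <= phi -> 0 <= delta ->
  (forall z, (1 - phi) * bil (Mw S b) z z <= phi * gamma * dotv z z) ->
  (forall z, (1 - phi) * bil (Mw S b') z z <= phi * gamma * dotv z z) ->
  (forall j, `|b j - b' j| <= delta * Num.sqrt (b j * b' j)) ->
  0 < \tr (S i *m invmx (Aw gamma S b)) -> 0 < \tr (S i *m invmx (Aw gamma S b')) ->
  `|\tr (S i *m invmx (Aw gamma S b)) - \tr (S i *m invmx (Aw gamma S b'))|
  <= delta * phi * Num.sqrt (\tr (S i *m invmx (Aw gamma S b)) *
                             \tr (S i *m invmx (Aw gamma S b'))).
Proof.
move=> hg hT hS hb hb' hphi hd Hb Hb' hdiff htX htY.
have hU : Aw gamma S b \in unitmx by apply: Aw_unit => // j; apply: ltW.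
have hU' : Aw gamma S b' \in unitmx by apply: Aw_unit => // j; apply: ltW.
have hXT : (invmx (Aw gamma S b))^T = invmx (Aw gamma S b) by rewrite trmx_inv Aw_sym.
have hYT : (invmx (Aw gamma S b'))^T = invmx (Aw gamma S b') by rewrite trmx_inv Aw_sym.
have hle1 := trXMX_le hT hU Hb (hT i) (hS i).
have hle2 := trXMX_le hT hU' Hb' (hT i) (hS i).
rewrite !trXMX in hle1 hle2.
rewrite tr_diff //.
move: htX htY hle1 hle2 hXT hYT.
set X := invmx (Aw gamma S b); set Y := invmx (Aw gamma S b').
set tX := \tr (S i *m X); set tY := \tr (S i *m Y).
move=> htX htY hle1 hle2 hXT hYT.
set sX := Num.sqrt tX; set sY := Num.sqrt tY.
have hsX : 0 < sX by rewrite sqrtr_gt0.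
have hsY : 0 < sY by rewrite sqrtr_gt0.
set t := sY / sX.
have ht : 0 < t by rewrite divr_gt0.
set c := fun j => \tr (S i *m X *m S j *m Y).
set u := fun j => \tr (S i *m X *m S j *m X).
set v := fun j => \tr (S i *m Y *m S j *m Y).
have hterm j : `|b' j - b j| * `|c j| <= delta / 2 * (t * b j * u j + b' j * v j / t).
  apply: term_bound => // tau htau.
  exact: amgm.
have hn : 0 <= (n%:R : R)^-1 by rewrite invr_ge0 ler0n.
rewrite normrM ger0_norm //.
apply: (le_trans (ler_wpM2l hn (ler_norm_sum _ _ _))).
under eq_bigr => j _ do rewrite normrM.
apply: (le_trans (ler_wpM2l hn (ler_sum _ (fun j _ => hterm j)))).
have esum : \sum_j delta / 2 * (t * b j * u j + b' j * v j / t) =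
   delta / 2 * (t * \sum_j b j * u j + (\sum_j b' j * v j) / t).
  rewrite -mulr_sumr; congr (_ * _); rewrite big_split /= mulr_sumr mulr_suml.
  by congr (_ + _); apply: eq_bigr => j _; rewrite /= ?mulrA.
rewrite esum.
set A1 := \sum_j b j * u j; set A2 := \sum_j b' j * v j.
have h1 : (n%:R)^-1 * A1 <= phi * tX by exact: hle1.
have h2 : (n%:R)^-1 * A2 <= phi * tY by exact: hle2.
have -> : (n%:R)^-1 * (delta / 2 * (t * A1 + A2 / t)) =
   delta / 2 * (t * ((n%:R)^-1 * A1) + ((n%:R)^-1 * A2) / t) by ring.
have hd2 : 0 <= delta / 2 by rewrite divr_ge0.
have hti : 0 <= t^-1 by rewrite invr_ge0 ltW.
apply: (le_trans (ler_wpM2l hd2 (lerD (ler_wpM2l (ltW ht) h1)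
            (ler_wpM2r hti h2)))).
have etX : tX = sX ^+ 2 by rewrite /sX sqr_sqrtr // ltW.
have etY : tY = sY ^+ 2 by rewrite /sY sqr_sqrtr // ltW.
rewrite sqrtrM ?(ltW htX) // -/sX -/sY.
rewrite {1}etX {1}etY /t.
rewrite le_eqVlt; apply/orP; left; apply/eqP.
by field; rewrite !gt_eqF.
Qed.


Lemma vnormE (R : realType) (p : nat) (x : 'cV[R]_p) : vnorm x = Num.sqrt (dotv x x).
Proof. by rewrite /vnorm dotvE; congr Num.sqrt; apply: eq_bigr => i _; rewrite expr2. Qed.

Lemma dotv_Z (R : realType) (p : nat) (k : R) (x : 'cV[R]_p) :
  dotv (k *: x) (k *: x) = k ^+ 2 * dotv x x.
Proof. by rewrite !dotv_bil bilZl bilZr mulrA expr2. Qed.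

Lemma vnormZ (R : realType) (p : nat) (k : R) (x : 'cV[R]_p) :
  vnorm (k *: x) = `|k| * vnorm x.
Proof. by rewrite !vnormE dotv_Z sqrtrM ?sqr_ge0 // sqrtr_sqr. Qed.

Lemma cauchy_schwarz (R : realType) (p : nat) (x y : 'cV[R]_p) :
  dotv x y ^+ 2 <= dotv x x * dotv y y.
Proof.
have [hx|hx] := eqVneq (dotv x x) 0.
  by rewrite hx mul0r (dotv_eq0 hx) /dotv trmx0 mul0mx mxE expr0n.
have hxp : 0 < dotv x x by rewrite lt_def hx dotv_ge0.
have h1 : (1%:M : 'M[R]_p)^T = 1%:M by rewrite tr_scalar_mx.
have := dotv_ge0 (y + (- (dotv x y / dotv x x)) *: x).
rewrite !dotv_bil bil_quad // -!dotv_bil (dotv_sym y x) => h.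
have e : dotv x x * (dotv y y + 2 * - (dotv x y / dotv x x) * dotv x y +
    (- (dotv x y / dotv x x)) ^+ 2 * dotv x x) = dotv x x * dotv y y - dotv x y ^+ 2.
  by field; rewrite gt_eqF.
have := mulr_ge0 (ltW hxp) h; rewrite e subr_ge0.
by [].
Qed.

Lemma NA (R : realType) (n p : nat) gamma (S : 'I_n -> 'M[R]_p) D (z : 'cV[R]_p) :
  Aw gamma S D \in unitmx ->
  (1%:M - gamma *: invmx (Aw gamma S D)) *m (Aw gamma S D *m z) = Mw S D *m z.
Proof.
move=> hU; rewrite mulmxBl mul1mx -scalemxAl mulmxA mulVmx // mul1mx.
by rewrite /Aw mulmxDl mul_scalar_mx addrK.
Qed.

Lemma dotv_Az (R : realType) (n p : nat) gamma (S : 'I_n -> 'M[R]_p) D (z : 'cV[R]_p) :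
  (Mw S D)^T = Mw S D ->
  dotv (Aw gamma S D *m z) (Aw gamma S D *m z) =
  dotv (Mw S D *m z) (Mw S D *m z) + 2 * gamma * bil (Mw S D) z z
  + gamma ^+ 2 * dotv z z.
Proof.
move=> hM.
have -> : Aw gamma S D *m z = Mw S D *m z + gamma *: z.
  by rewrite /Aw mulmxDl mul_scalar_mx.
have h1 : (1%:M : 'M[R]_p)^T = 1%:M by rewrite tr_scalar_mx.
rewrite !dotv_bil bil_quad // -!dotv_bil.
suff -> : dotv (Mw S D *m z) z = bil (Mw S D) z z by [].
by rewrite dotv_sym /dotv /bil mulmxA.
Qed.

Lemma N_contract (R : realType) (n p : nat) gamma (S : 'I_n -> 'M[R]_p) D (x : 'cV[R]_p) :
  0 < gamma -> (forall j, (S j)^T = S j) -> (forall j x, 0 <= bil (S j) x x) ->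
  (forall j, 0 <= D j) ->
  vnorm ((1%:M - gamma *: invmx (Aw gamma S D)) *m x) <= vnorm x.
Proof.
move=> hg hT hS hD.
have hU := Aw_unit hg hT hS hD.
set z := invmx (Aw gamma S D) *m x.
have hz : Aw gamma S D *m z = x by rewrite /z mulmxA mulmxV // mul1mx.
rewrite -{1 2}hz NA // !vnormE ler_sqrt; last by rewrite dotv_ge0.
rewrite dotv_Az ?Mw_sym //.
have := Mw_psd (fun j => hS j z) hD; have := dotv_ge0 z.
move=> h1 h2.
have : 0 <= 2 * gamma * bil (Mw S D) z z by rewrite mulr_ge0 // mulr_ge0 // ltW.
have : 0 <= gamma ^+ 2 * dotv z z by rewrite mulr_ge0 // sqr_ge0.
lra.
Qed.

Lemma vnorm_ge0 (R : realType) (p : nat) (x : 'cV[R]_p) : 0 <= vnorm x.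
Proof. by rewrite vnormE sqrtr_ge0. Qed.

Lemma vnorm0 (R : realType) (p : nat) : vnorm (0 : 'cV[R]_p) = 0.
Proof. by rewrite vnormE /dotv trmx0 mul0mx mxE sqrtr0. Qed.

Local Open Scope classical_set_scope.
Lemma specnorm_props (R : realType) (p : nat) (N : 'M[R]_p) :
  (forall x, vnorm (N *m x) <= vnorm x) ->
  [/\ 0 <= specnorm N, specnorm N <= 1 &
      forall x, vnorm (N *m x) <= specnorm N * vnorm x].
Proof.
move=> hN.
set E := [set vnorm (N *m x) | x in [set x : 'cV[R]_p | vnorm x <= 1]].
have hE0 : E 0.
  by exists 0; rewrite /= ?vnorm0 ?ler01 // mulmx0 vnorm0.
have hub : ubound E 1.
  by move=> y [x /= hx <-]; apply: le_trans (hN x) hx.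
have hub' : has_ubound E by exists 1.
have hsup := ub_le_sup hub'.
have h0 : 0 <= specnorm N by apply: hsup.
split => //.
  by apply: ge_sup => //; exists 0.
move=> x.
have [hx|hx] := eqVneq (vnorm x) 0.
  have : dotv x x = 0.
    by move: hx; rewrite vnormE => /eqP; rewrite sqrtr_eq0 => hle; apply/eqP; rewrite eq_le hle dotv_ge0.
  by move/dotv_eq0 => ->; rewrite mulmx0 vnorm0 mulr0.
have hxp : 0 < vnorm x by rewrite lt_def hx vnorm_ge0.
have hy : E (vnorm (N *m ((vnorm x)^-1 *: x))).
  exists ((vnorm x)^-1 *: x) => //=.
  by rewrite vnormZ ger0_norm ?invr_ge0 ?vnorm_ge0 // mulVf.
have := hsup _ hy.
rewrite -scalemxAr vnormZ ger0_norm ?invr_ge0 ?vnorm_ge0 // => h.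
by rewrite -ler_pdivrMr // mulrC.
Qed.

Lemma alg_final (R : realType) (a q w psi gamma : R) :
  0 <= a -> 0 <= q -> 0 <= w -> 0 <= psi -> psi <= 1 -> 0 < gamma ->
  q ^+ 2 <= w * a -> a <= psi ^+ 2 * (a + 2 * gamma * q + gamma ^+ 2 * w) ->
  (1 - psi) * q <= psi * gamma * w.
Proof.
move=> ha hq hw hp hp1 hg hcs hA.
rewrite leNgt; apply/negP => hc.
have hq0 : 0 < q.
  rewrite lt_def hq andbT; apply/eqP => q0; move: hc; rewrite q0 mulr0.
  by rewrite ltNge mulr_ge0 // mulr_ge0 // ltW.
have h1 : (1 - psi ^+ 2) * q ^+ 2 <= (1 - psi ^+ 2) * (w * a).
  by rewrite ler_wpM2l // subr_ge0 expr_le1.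
have h2 : (1 - psi ^+ 2) * (w * a) <= w * (psi ^+ 2 * (2 * gamma * q + gamma ^+ 2 * w)).
  have : w * ((1 - psi ^+ 2) * a) <= w * (psi ^+ 2 * (2 * gamma * q + gamma ^+ 2 * w)).
    by rewrite ler_wpM2l //; lra.
  by rewrite mulrCA.
have h3 : 0 < (1 + psi) * q + psi * gamma * w.
  by rewrite ltr_pwDl ?mulr_gt0 // ?mulr_ge0 // ?ltW //; lra.
have h4 : 0 < ((1 - psi) * q - psi * gamma * w) * ((1 + psi) * q + psi * gamma * w).
  by rewrite mulr_gt0 // subr_gt0.
have e : ((1 - psi) * q - psi * gamma * w) * ((1 + psi) * q + psi * gamma * w) =
  (1 - psi ^+ 2) * q ^+ 2 - w * (psi ^+ 2 * (2 * gamma * q + gamma ^+ 2 * w)) by ring.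
rewrite e in h4; lra.
Qed.

Lemma phi_props (R : realType) (n p : nat) gamma (S : 'I_n -> 'M[R]_p) D :
  0 < gamma -> (forall j, (S j)^T = S j) -> (forall j x, 0 <= bil (S j) x x) ->
  (forall j, 0 <= D j) ->
  [/\ 0 <= phiS gamma S D, phiS gamma S D <= 1 &
   forall phi z, phiS gamma S D <= phi -> phi <= 1 ->
     (1 - phi) * bil (Mw S D) z z <= phi * gamma * dotv z z].
Proof.
move=> hg hT hS hD.
have hU := Aw_unit hg hT hS hD.
have [h0 h1 h2] := specnorm_props (fun x => N_contract x hg hT hS hD).
change (phiS gamma S D) with (specnorm (1%:M - gamma *: invmx (Aw gamma S D))).
split => // phi z hle hle1.
set psi := specnorm _ in h0 h1 h2 hle.
set A := Aw gamma S D in hU h2 hle.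
set M := Mw S D.
have hM : M^T = M by apply: Mw_sym.
have hv := h2 (A *m z).
rewrite NA // in hv.
rewrite !vnormE in hv.
have ha := dotv_ge0 (M *m z).
have hq : 0 <= bil M z z by apply: Mw_psd.
have hw := dotv_ge0 z.
have hsq : dotv (M *m z) (M *m z) <= psi ^+ 2 * dotv (A *m z) (A *m z).
  rewrite -(sqr_sqrtr ha) -(sqr_sqrtr (dotv_ge0 (A *m z))) -exprMn.
  by rewrite ler_pXn2r // ?nnegrE ?sqrtr_ge0 ?mulr_ge0 // sqrtr_ge0.
rewrite /A dotv_Az // -/M in hsq.
have hcs := cauchy_schwarz z (M *m z).
have eq : dotv z (M *m z) = bil M z z by rewrite /dotv /bil mulmxA.
rewrite eq in hcs.
have := alg_final ha hq hw h0 h1 hg hcs hsq.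
move=> hf.
have : (1 - phi) * bil M z z <= (1 - psi) * bil M z z by rewrite ler_wpM2r //; lra.
have : psi * gamma * dotv z z <= phi * gamma * dotv z z.
  by rewrite ler_wpM2r // ler_wpM2r // ltW.
lra.
Qed.


Definition tm (R : realType) (x y : R) := `|x - y| / Num.sqrt (x * y).

Lemma tm_ge0 (R : realType) (x y : R) : 0 <= tm x y.
Proof. by rewrite /tm divr_ge0 ?sqrtr_ge0. Qed.

Lemma tm_eq (R : realType) (x y : R) : 0 < x -> 0 < y ->
  `|x - y| = tm x y * Num.sqrt (x * y).
Proof.
move=> hx hy; have h : 0 < Num.sqrt (x * y) by rewrite sqrtr_gt0 mulr_gt0.
by rewrite /tm divfK // gt_eqF.
Qed.

Lemma tm_inv (R : realType) (x y : R) : 0 < x -> 0 < y -> tm x^-1 y^-1 = tm x y.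
Proof.
move=> hx hy; rewrite /tm -invfM sqrtrV ?mulr_ge0 ?ltW //.
set s := Num.sqrt (x * y).
have hs : 0 < s by rewrite sqrtr_gt0 mulr_gt0.
have exy : x * y = s ^+ 2 by rewrite sqr_sqrtr // mulr_ge0 ?ltW.
have -> : x^-1 - y^-1 = (y - x) / (x * y) by field; rewrite !gt_eqF.
rewrite normrM normfV (gtr0_norm (mulr_gt0 hx hy)) distrC exy.
by field; rewrite gt_eqF.
Qed.

Lemma tm_scale (R : realType) (c x y : R) : 0 < c -> 0 < x -> 0 < y ->
  tm (c * x) (c * y) = tm x y.
Proof.
move=> hc hx hy; rewrite /tm -mulrBr normrM (gtr0_norm hc).
rewrite mulrACA sqrtrM ?mulr_ge0 ?ltW // -expr2 sqrtr_sqr (gtr0_norm hc).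
have hs : 0 < Num.sqrt (x * y) by rewrite sqrtr_gt0 mulr_gt0.
by field; rewrite !gt_eqF.
Qed.

Lemma sqrt_sum (R : realType) (u u' l l' : R) :
  0 < u -> 0 < u' -> 0 < l -> 0 < l' ->
  Num.sqrt (u * u') + Num.sqrt (l * l') <= Num.sqrt ((u + l) * (u' + l')).
Proof.
move=> hu hu' hl hl'.
have [a ha ea] : exists2 a, 0 <= a & u = a ^+ 2 by exists (Num.sqrt u); rewrite ?sqrtr_ge0 ?sqr_sqrtr ?ltW.
have [a' ha' ea'] : exists2 a, 0 <= a & u' = a ^+ 2 by exists (Num.sqrt u'); rewrite ?sqrtr_ge0 ?sqr_sqrtr ?ltW.
have [c hc ec] : exists2 a, 0 <= a & l = a ^+ 2 by exists (Num.sqrt l); rewrite ?sqrtr_ge0 ?sqr_sqrtr ?ltW.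
have [c' hc' ec'] : exists2 a, 0 <= a & l' = a ^+ 2 by exists (Num.sqrt l'); rewrite ?sqrtr_ge0 ?sqr_sqrtr ?ltW.
rewrite ea ea' ec ec' -!exprMn !sqrtr_sqr !ger0_norm ?mulr_ge0 //.
rewrite -(ger0_norm (addr_ge0 (mulr_ge0 ha ha') (mulr_ge0 hc hc'))) -sqrtr_sqr.
rewrite ler_sqrt; last by rewrite mulr_ge0 // addr_ge0 // sqr_ge0.
have h := sqr_ge0 (a * c' - c * a').
have e : (a ^+ 2 + c ^+ 2) * (a' ^+ 2 + c' ^+ 2) - (a * a' + c * c') ^+ 2 = (a * c' - c * a') ^+ 2 by ring.
by rewrite -subr_ge0 e.
Qed.

Lemma b_core (R : realType) (D D' L L' : R) :
  0 < D -> 0 < D' -> 0 < L -> 0 < L' ->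
  let U := D^-1 + L in let U' := D'^-1 + L' in
  [/\ `|U - U'| <= tm D D' * Num.sqrt (D^-1 * D'^-1) + tm L L' * Num.sqrt (L * L'),
      0 < Num.sqrt (D^-1 * D'^-1) &
      Num.sqrt (D^-1 * D'^-1) + Num.sqrt (L * L') <= Num.sqrt (U * U')].
Proof.
move=> hD hD' hL hL' U U'.
have hu : 0 < D^-1 by rewrite invr_gt0.
have hu' : 0 < D'^-1 by rewrite invr_gt0.
split.
- rewrite -(tm_inv hD hD') -!tm_eq //.
  have -> : U - U' = (D^-1 - D'^-1) + (L - L') by rewrite /U /U'; ring.
  exact: ler_normD.
- by rewrite sqrtr_gt0 mulr_gt0.
- exact: sqrt_sum.
Qed.

Lemma b_form (R : realType) (D L : R) : 0 < D -> 0 < L ->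
  D / (1 + D * L) = (D^-1 + L)^-1.
Proof.
move=> hD hL; have h : 0 < 1 + D * L by rewrite addr_gt0 ?mulr_gt0.
have -> : D^-1 + L = (1 + D * L) / D by field; rewrite gt_eqF.
by rewrite invf_div.
Qed.

Lemma b_bound (R : realType) (D D' L L' m : R) :
  0 < D -> 0 < D' -> 0 < L -> 0 < L' -> 0 <= m ->
  tm L L' <= m ->
  (tm D D' <= m -> tm (D / (1 + D * L)) (D' / (1 + D' * L')) <= m) /\
  (tm D D' < m -> tm (D / (1 + D * L)) (D' / (1 + D' * L')) < m).
Proof.
move=> hD hD' hL hL' hm hLm.
have [h1 hg1 h3] := b_core hD hD' hL hL'.
have hU : 0 < D^-1 + L by rewrite addr_gt0 ?invr_gt0.
have hU' : 0 < D'^-1 + L' by rewrite addr_gt0 ?invr_gt0.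
rewrite !b_form // tm_inv //.
have hs : 0 < Num.sqrt ((D^-1 + L) * (D'^-1 + L')) by rewrite sqrtr_gt0 mulr_gt0.
have hg2 : 0 <= Num.sqrt (L * L') by rewrite sqrtr_ge0.
set g1 := Num.sqrt (D^-1 * D'^-1) in h1 hg1 h3.
set g2 := Num.sqrt (L * L') in h1 hg2 h3.
set s := Num.sqrt _ in hs h3.
have e2 : tm L L' * g2 <= m * g2 by rewrite ler_wpM2r.
have hms : m * (g1 + g2) <= m * s by rewrite ler_wpM2l.
split => hDm; rewrite /tm -/s.
- rewrite ler_pdivrMr // mulrC; apply: (le_trans h1).
  have e1 : tm D D' * g1 <= m * g1 by rewrite ler_wpM2r // ltW.
  rewrite [s * m]mulrC; apply: (le_trans _ hms); rewrite mulrDr; exact: lerD.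
- rewrite ltr_pdivrMr // mulrC; apply: (le_lt_trans h1).
  have e1 : tm D D' * g1 < m * g1 by rewrite ltr_pM2r.
  rewrite [s * m]mulrC; apply: (lt_le_trans _ hms); rewrite mulrDr; exact: ltr_leD.
Qed.


Lemma d_s_ge0 (R : realType) (n : nat) (D D' : 'I_n -> R) : 0 <= d_s D D'.
Proof.
rewrite /d_s; elim/big_ind: _ => //.
  by move=> x y hx hy; rewrite le_max hx.
by move=> i _; apply: tm_ge0.
Qed.

Lemma d_s_term (R : realType) (n : nat) (D D' : 'I_n -> R) j :
  tm (D j) (D' j) <= d_s D D'.
Proof. exact: (le_bigmax 0 (fun i => tm (D i) (D' i)) j). Qed.

Theorem proposition5 (R : realType) (n p : nat) (gamma : R)
  (S : 'I_n -> 'M[R]_p) :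
  0 < gamma ->
  (forall i, psd_sym (S i) /\ S i != 0) ->
  forall D D' L L' : 'I_n -> R,
    posdiag D -> posdiag D' ->
    is_LambdaS gamma S D L -> is_LambdaS gamma S D' L' ->
    d_s L L' <= Num.max (phiS gamma S D) (phiS gamma S D') * d_s D D'
    /\ d_s L L' <= d_s D D'.
Proof.
move=> hg hSall D D' L L' hD hD' [hL hLeq] [hL' hL'eq].
have hT j : (S j)^T = S j by case: (hSall j) => [[]].
have hSp j x : 0 <= bil (S j) x x by case: (hSall j) => [[_ h] _]; apply: h.
pose b := fun j => D j / (1 + D j * L j).
pose b' := fun j => D' j / (1 + D' j * L' j).
have hb j : 0 < b j by rewrite /b divr_gt0 // addr_gt0 // mulr_gt0.
have hb' j : 0 < b' j by rewrite /b' divr_gt0 // addr_gt0 // mulr_gt0.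
have hbD j : b j <= D j.
  rewrite /b ler_pdivrMr ?addr_gt0 ?mulr_gt0 //.
  by apply: ler_peMr; [exact: ltW | rewrite lerDl mulr_ge0 // ltW].
have hbD' j : b' j <= D' j.
  rewrite /b' ler_pdivrMr ?addr_gt0 ?mulr_gt0 //.
  by apply: ler_peMr; [exact: ltW | rewrite lerDl mulr_ge0 // ltW].
have [p0 p1 pH] := phi_props hg hT hSp (fun j => ltW (hD j)).
have [p0' p1' pH'] := phi_props hg hT hSp (fun j => ltW (hD' j)).
move: (phiS gamma S D) (phiS gamma S D') p0 p1 pH p0' p1' pH'.
move=> psi psi' p0 p1 pH p0' p1' pH'.
have hphiA : psi <= Num.max psi psi' by rewrite le_max lexx.
have hphiB : psi' <= Num.max psi psi' by rewrite le_max lexx orbT.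
have hphi0 : 0 <= Num.max psi psi' by apply: le_trans p0 hphiA.
have hphi1 : Num.max psi psi' <= 1 by rewrite ge_max p1 p1'.
move: (Num.max psi psi') hphiA hphiB hphi0 hphi1 => phi hphiA hphiB hphi0 hphi1.
have Hb z : (1 - phi) * bil (Mw S b) z z <= phi * gamma * dotv z z.
  apply: (le_trans _ (pH phi z hphiA hphi1)).
  by rewrite ler_wpM2l ?subr_ge0 //; apply: Mw_mono.
have Hb' z : (1 - phi) * bil (Mw S b') z z <= phi * gamma * dotv z z.
  apply: (le_trans _ (pH' phi z hphiB hphi1)).
  by rewrite ler_wpM2l ?subr_ge0 //; apply: Mw_mono.
set delta := d_s b b'.
have hd0 : 0 <= delta by apply: d_s_ge0.
have hdiff j : `|b j - b' j| <= delta * Num.sqrt (b j * b' j).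
  rewrite tm_eq // ler_wpM2r ?sqrtr_ge0 //; exact: (d_s_term b b' j).
have e i : L i = (n%:R)^-1 * \tr (S i *m invmx (Aw gamma S b)) := hLeq i.
have e' i : L' i = (n%:R)^-1 * \tr (S i *m invmx (Aw gamma S b')) := hL'eq i.
have hterm i : tm (L i) (L' i) <= phi * delta.
  have hn : 0 < (n%:R : R)^-1.
    by rewrite invr_gt0 ltr0n (leq_ltn_trans (leq0n i) (ltn_ord i)).
  have htX : 0 < \tr (S i *m invmx (Aw gamma S b)).
    by rewrite -(pmulr_rgt0 _ hn) -e.
  have htY : 0 < \tr (S i *m invmx (Aw gamma S b')).
    by rewrite -(pmulr_rgt0 _ hn) -e'.
  rewrite e e' tm_scale // /tm ler_pdivrMr ?sqrtr_gt0 ?mulr_gt0 //.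
  rewrite [phi * delta]mulrC.
  exact: keyK.
have htheta : d_s L L' <= phi * delta.
  by apply: bigmax_le => [|i _]; [rewrite mulr_ge0 | apply: hterm].
have hLj j := d_s_term L L' j.
have hDj j := d_s_term D D' j.
have hdd := d_s_ge0 D D'.
have hle : d_s L L' <= d_s D D'.
  rewrite leNgt; apply/negP => hlt.
  have hpos : 0 < d_s L L' by apply: le_lt_trans hdd hlt.
  have hdt : delta < d_s L L'.
    apply: bigmax_lt => // j _.
    have [_ h2] := b_bound (hD j) (hD' j) (hL j) (hL' j) (ltW hpos) (hLj j).
    exact: h2 (le_lt_trans (hDj j) hlt).
  have : d_s L L' <= delta.
    apply: le_trans htheta _; exact: ler_piMl.
  by rewrite leNgt hdt.
have hdD : delta <= d_s D D'.
  apply: bigmax_le => // j _.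
  have [h1 _] := b_bound (hD j) (hD' j) (hL j) (hL' j) hdd (le_trans (hLj j) hle).
  exact: h1 (hDj j).
split => //.
apply: le_trans htheta _; exact: ler_wpM2l.
Qed.
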